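(* Let $\tilde L$ be a minimum-size counterexample. For every $x\in\tilde L\setminus\{0_{\tilde L},1_{\tilde L}\}$, the set $({\parallel}x)=\{y\in\tilde L: y \text{ is incomparable with } x\}$ is not a chain; that is, there exist two elements of $\tilde L$ that are incomparable with each other and each incomparable with $x$.
   Context: For a poset $P$, $x$ upper covers $y$ if $y<x$ with nothing strictly between; join-irreducible: upper covers exactly one element. For $x\in P$, ${\uparrow}x=\{y: x\le y\}$. A chain is a totally ordered subset (the empty set and singletons count as chains). $0_{\tilde L}$, $1_{\tilde L}$ are the least and greatest elements. A counterexample is a finite lattice $L$ with $|L|>1$ in which every join-irreducible $j$ satisfies $|{\uparrow}j|>|L|/2$; a minimum-size counterexample is a counterexample $\tilde L$ such that no counterexample has fewer elements. *)

(* Defs.v *)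
From HB Require Import structures.
From mathcomp Require Import all_boot all_order.
Set Implicit Arguments. Unset Strict Implicit. Unset Printing Implicit Defensive.
Import Order.TTheory.
Local Open Scope order_scope.

Definition upper_covers (d : Order.disp_t) (P : finPOrderType d) (x y : P) : bool :=
  (y < x) && [forall z : P, ~~ ((y < z) && (z < x))].

Definition join_irreducible (d : Order.disp_t) (P : finPOrderType d) (j : P) : bool :=
  #|[set y : P | upper_covers j y]| == 1%N.

Definition upset (d : Order.disp_t) (P : finPOrderType d) (x : P) : {set P} :=
  [set y : P | x <= y].

(* counterexample: finite lattice with |L| > 1, each join-irreducible j has
   |up j| > |L|/2, i.e. 2 * |up j| > |L| *)
Definition counterexample (d : Order.disp_t) (L : finLatticeType d) : Prop :=
  (1 < #|L|)%N /\
  forall j : L, join_irreducible j -> (#|L| < 2 * #|upset j|)%N.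

Definition min_counterexample (d : Order.disp_t) (L : finLatticeType d) : Prop :=
  counterexample L /\
  forall (d' : Order.disp_t) (L' : finLatticeType d'),
    (#|L'| < #|L|)%N -> ~ counterexample L'.

(* Main.v *)
Require Import Defs.
From HB Require Import structures.
From mathcomp Require Import all_boot all_order.
From mathcomp Require Import zify.
Import Order.TTheory.
Local Open Scope order_scope.
Set Implicit Arguments. Unset Strict Implicit. Unset Printing Implicit Defensive.

Section Itv.
Variables (d : Order.disp_t) (L : finLatticeType d) (x : L).
Definition itv := {y : L | x <= y}.
HB.instance Definition _ := [isSub of itv for (@sval L (fun y => x <= y))].
HB.instance Definition _ := [Finite of itv by <:].
Lemma itv_meet : meet_closed (fun y : L => x <= y).
Proof. by move=> a b; rewrite !unfold_in /= => ha hb; rewrite lexI ha hb. Qed.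
Lemma itv_join : join_closed (fun y : L => x <= y).
Proof. by move=> a b; rewrite !unfold_in /= => ha hb; exact: le_trans ha (leUl a b). Qed.
HB.instance Definition _ :=
  Order.SubChoice_isSubLattice.Build d L (fun y => x <= y) d itv itv_meet itv_join.

Lemma itv_le (a b : itv) : (a <= b) = (val a <= val b).
Proof. by rewrite Order.le_val. Qed.
Lemma itv_lt (a b : itv) : (a < b) = (val a < val b).
Proof. by rewrite Order.SubPreorderTheory.lt_val. Qed.

Lemma itv_covers (a b : itv) : upper_covers a b = upper_covers (val a) (val b).
Proof.
rewrite /upper_covers itv_lt; case: (val b < val a) => //=.
apply/forallP/forallP => H w.
- apply/negP => /andP[h1 h2].
  have xw : x <= w by apply: le_trans (valP b) (ltW h1).
  move: (H (Sub w xw)); rewrite !itv_lt SubK h1 h2 //.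
- by move: (H (val w)); rewrite !itv_lt.
Qed.

Lemma itv_card : #|{: itv}| = #|[set y : L | x <= y]|.
Proof. by rewrite cardsE card_sig. Qed.

Lemma itv_upset (a : itv) : #|upset a| = #|upset (val a)|.
Proof.
rewrite /upset.
have -> : [set y : L | val a <= y] = val @: [set y | a <= y].
  apply/setP => w; rewrite inE; apply/idP/imsetP.
  - move=> h; have xw : x <= w by apply: le_trans (valP a) h.
    by exists (Sub w xw); rewrite ?inE ?itv_le SubK.
  - by case=> v; rewrite inE itv_le => h ->.
by rewrite card_imset //; exact: val_inj.
Qed.
End Itv.

Section Gen.
Variables (d : Order.disp_t) (L : finLatticeType d).
Implicit Types a b e w z : L.

Lemma incompE a b : (a >< b) = ~~ (a <= b) && ~~ (b <= a).
Proof. by rewrite /Order.comparable negb_or. Qed.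

Lemma compE a b : (a >=< b) = (a <= b) || (b <= a).
Proof. by []. Qed.

Lemma cov_lt b z : upper_covers b z -> z < b.
Proof. by case/andP. Qed.

Lemma cov_nb b z w : upper_covers b z -> z < w -> w < b -> False.
Proof.
by case/andP=> _ /forallP /(_ w); rewrite negb_and => /orP[] /negP.
Qed.

Lemma down_lt a b : a < b -> leq (#|[set e | e <= a]|).+1 #|[set e | e <= b]|.
Proof.
move=> ab; apply: proper_card; apply/properP; split.
- by apply/subsetP => e; rewrite !inE => h; exact: le_trans h (ltW ab).
- by exists b; rewrite !inE ?lexx // lt_geF.
Qed.

Lemma lower_cover_ex a b : a < b -> exists z, a <= z /\ upper_covers b z.
Proof.
move=> ab.
pose P := [pred z : L | (a <= z) && (z < b)].
have Pa : P a by rewrite inE lexx ab.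
case: (@arg_maxnP _ a P (fun z => #|[set e : L | e <= z]|) Pa) => z.
rewrite inE => /andP[az zb] Hmax.
exists z; split => //; rewrite /upper_covers zb /=.
apply/forallP => w; apply/negP => /andP[zw wb].
have := Hmax w; rewrite inE (le_trans az (ltW zw)) wb => /(_ isT) /=.
by move=> h; move: (down_lt zw); rewrite ltnNge h.
Qed.

Lemma two_covers_join b z1 z2 :
  upper_covers b z1 -> upper_covers b z2 -> z1 != z2 -> z1 `|` z2 = b.
Proof.
move=> c1 c2 ne.
have l1 := cov_lt c1; have l2 := cov_lt c2.
have hle : z1 `|` z2 <= b by rewrite leUx (ltW l1) (ltW l2).
have hgt : z1 < z1 `|` z2.
  rewrite lt_neqAle leUl andbT; apply/eqP => h.
  have : z2 <= z1 by rewrite h leUr.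
  rewrite le_eqVlt => /orP[/eqP e|lt21]; first by rewrite e eqxx in ne.
  exact: (cov_nb c2 lt21 l1).
move: hle; rewrite le_eqVlt => /orP[/eqP //|hlt].
by case: (cov_nb c1 hgt hlt).
Qed.

Lemma jirrP j : join_irreducible j ->
  exists z, upper_covers j z /\ forall z', upper_covers j z' -> z' = z.
Proof.
rewrite /join_irreducible => /cards1P[z hz].
exists z; split.
  have : z \in [set y | upper_covers j y] by rewrite hz set11.
  by rewrite inE.
move=> z' hz'; have : z' \in [set y | upper_covers j y] by rewrite inE.
by rewrite hz in_set1 => /eqP.
Qed.

Lemma jirrI j z : upper_covers j z -> (forall z', upper_covers j z' -> z' = z) ->
  join_irreducible j.
Proof.
move=> hz H; apply/cards1P; exists z; apply/setP => w; rewrite !inE.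
apply/idP/eqP => [/H //|->//].
Qed.

Lemma nonjirr2 e z : ~~ join_irreducible e -> upper_covers e z ->
  exists z', upper_covers e z' /\ z' != z.
Proof.
move=> nj hz; case: (boolP [exists z', upper_covers e z' && (z' != z)]).
  by case/existsP => z' /andP[h1 h2]; exists z'.
rewrite negb_exists => /forallP H; case/negP: nj; apply: (jirrI hz) => z' hz'.
by move: (H z'); rewrite hz' /= negbK => /eqP.
Qed.
End Gen.

Lemma up_lemma (d : Order.disp_t) (L : finTBLatticeType d) (x : L) :
  min_counterexample L -> x != \bot -> x != \top ->
  exists c : L, (c >< x) && leq (2 * #|upset (c `|` x)|) #|[set y : L | x <= y]|.
Proof.
case=> [[n1 Hbad] Hmin] x0 x1.
have hlt : (#|{: itv x}| < #|L|)%N.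
  rewrite itv_card -cardsT; apply: proper_card; apply/properP; split.
    exact: subsetT.
  by exists \bot; rewrite !inE // lex0.
have h1 : (1 < #|{: itv x}|)%N.
  rewrite itv_card; apply: leq_trans (_ : #|[set x; \top]| <= _)%N.
    by rewrite cards2 x1.
  by apply: subset_leq_card; apply/subsetP => w; rewrite !inE => /orP[]/eqP->.
have Hn := Hmin _ (itv x) hlt.
have : ~~ [forall j : itv x, join_irreducible j ==> (#|{: itv x}| < 2 * #|upset j|)%N].
  apply/negP => /forallP H; apply: Hn; split => // j hj; exact: (implyP (H j) hj).
rewrite negb_forall => /existsP[y]; rewrite negb_imply -leqNgt => /andP[yj ybound].
case: (boolP (join_irreducible (val y))) => [vj|vnj].
  have := Hbad _ vj; rewrite -itv_upset => HH.
  by have := leq_trans HH (leq_trans ybound (ltnW hlt)); rewrite ltnn.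
have [z0 [hz0 hz0u]] := jirrP yj.
have hz0L : upper_covers (val y) (val z0) by rewrite -itv_covers.
have [z' [hz' nz']] := nonjirr2 vnj hz0L.
have nxz : ~~ (x <= z').
  apply/negP => xz; move/negP: nz'; apply.
  have hc : upper_covers y (Sub z' xz : itv x) by rewrite itv_covers SubK.
  by rewrite -(hz0u _ hc) SubK.
have xy : x < val y.
  apply: le_lt_trans (valP z0) _; exact: cov_lt hz0L.
have nzx : ~~ (z' <= x).
  apply/negP; rewrite le_eqVlt => /orP[/eqP e|zx].
    by move: nxz; rewrite e lexx.
  exact: (cov_nb hz' zx xy).
have ej : z' `|` x = val y.
  have hle : z' `|` x <= val y by rewrite leUx (ltW (cov_lt hz')) (ltW xy).
  have hgt : z' < z' `|` x.
    rewrite lt_neqAle leUl andbT; apply/eqP => h.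
    by move: nxz; rewrite h leUr.
  move: hle; rewrite le_eqVlt => /orP[/eqP //|hlt'].
  by case: (cov_nb hz' hgt hlt').
exists z'; rewrite incompE nzx nxz /= ej -itv_upset.
by move: ybound; rewrite itv_card.
Qed.
Unset Implicit Arguments.

Lemma lt_of_comp (d : Order.disp_t) (L : finLatticeType d) (z x : L) :
  ~~ (z >< x) -> ~~ (x <= z) -> z < x.
Proof.
rewrite incompE negb_and !negbK => /orP[zx|xz] nxz.
  rewrite lt_neqAle zx andbT; apply/eqP => e; by move: nxz; rewrite e lexx.
by rewrite xz in nxz.
Qed.

Theorem theorem2p13 (d : Order.disp_t) (L : finTBLatticeType d) :
  min_counterexample L ->
  forall x : L, x != \bot -> x != \top ->
    exists y z : L, [/\ y >< x, z >< x & y >< z].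
Proof.
move=> hmin x x0 x1.
case: (boolP [exists y : L, exists z : L, [&& y >< x, z >< x & y >< z]]).
  by case/existsP => y /existsP[z /and3P[h1 h2 h3]]; exists y, z.
move=> hno; exfalso.
have hch : forall a b : L, a >< x -> b >< x -> a >=< b.
  move=> a b ha hb; apply/negPn/negP => hab; move/negP: hno; apply.
  by apply/existsP; exists a; apply/existsP; exists b; rewrite ha hb hab.
have [c /andP[cx hc]] := up_lemma hmin x0 x1.
case: hmin => [[n1 Hbad] _].
have incx : forall e : L, e >< x -> ~~ (e <= x) /\ ~~ (x <= e).
  by move=> e; rewrite incompE => /andP.
pose PC := [pred e : L | e >< x].
have PCc : PC c by [].
case: (@arg_minnP _ c PC (fun z => #|[set e : L | e <= z]|) PCc) => c0 c0x Hmin0.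
have {}c0x : c0 >< x by exact: c0x.
have c0jirr : join_irreducible c0.
  have b0 : \bot < c0.
    rewrite lt_neqAle le0x andbT; apply/eqP => e.
    by move: c0x; rewrite /= incompE -e le0x.
  have [z0 [_ hz0]] := lower_cover_ex b0.
  have below : forall z, upper_covers c0 z -> z < x.
    move=> z hz; have zc := cov_lt hz.
    have nxz : ~~ (x <= z).
      apply/negP => xz; case: (incx c0 c0x) => _ /negP; apply.
      exact: le_trans xz (ltW zc).
    apply: lt_of_comp nxz; apply/negP => zx.
    by have := Hmin0 z zx; rewrite leqNgt (down_lt zc).
  apply: (jirrI hz0) => z' hz'; case: (eqVneq z' z0) => // ne; exfalso.
  have ej := two_covers_join hz' hz0 ne.
  case: (incx c0 c0x) => /negP HH _; apply: HH.
  by rewrite -ej leUx (ltW (below _ hz')) (ltW (below _ hz0)).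
pose PJ := [pred e : L | (e >< x) && join_irreducible e].
have PJc0 : PJ c0 by rewrite /= c0x c0jirr.
case: (@arg_maxnP _ c0 PJ (fun z => #|[set e : L | e <= z]|) PJc0) => j /andP[jx jj] HmaxJ.
pose K := [set e : L | (e >< x) && (j < e)].
have Knj : forall e, e \in K -> ~~ join_irreducible e.
  move=> e; rewrite inE => /andP[ex je]; apply/negP => ej.
  have := HmaxJ e; rewrite /= ex ej => /(_ isT) /=.
  by rewrite leqNgt (down_lt je).
have notU : forall e z, e >< x -> upper_covers e z -> ~~ (x <= z).
  move=> e z ex hz; apply/negP => xz; case: (incx e ex) => _ /negP; apply.
  exact: le_trans xz (ltW (cov_lt hz)).
have dcov : forall e, e \in K -> exists dd, (dd < x) && upper_covers e dd.
  move=> e eK; have := eK; rewrite inE => /andP[ex je].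
  have [z1 [jz1 hz1]] := lower_cover_ex je.
  have [z2 [hz2 ne]] := nonjirr2 (Knj e eK) hz1.
  case: (boolP (z1 >< x)) => z1x; last first.
    by exists z1; rewrite hz1 andbT; apply: lt_of_comp z1x (notU _ _ ex hz1).
  case: (boolP (z2 >< x)) => z2x; last first.
    by exists z2; rewrite hz2 andbT; apply: lt_of_comp z2x (notU _ _ ex hz2).
  exfalso; have := hch z1 z2 z1x z2x; rewrite compE => /orP[l12|l21].
    have lt12 : z1 < z2 by rewrite lt_neqAle eq_sym ne l12.
    exact: (cov_nb hz1 lt12 (cov_lt hz2)).
  have lt21 : z2 < z1 by rewrite lt_neqAle ne l21.
  exact: (cov_nb hz2 lt21 (cov_lt hz1)).
pose dsel := fun e : L => odflt \bot [pick dd | (dd < x) && upper_covers e dd].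
have dselP : forall e, e \in K -> (dsel e < x) && upper_covers e (dsel e).
  move=> e eK; rewrite /dsel; case: pickP => [dd hdd // | none].
  by have [dd hdd] := dcov e eK; rewrite none in hdd.
have key : forall u : L, x <= u -> j <= u -> forall c', c' >< x -> c' <= u.
  move=> u xu ju c' c'x; apply/negPn/negP => nc'.
  pose PM := [pred z : L | (z >< x) && ~~ (z <= u)].
  have PMc' : PM c' by rewrite /= c'x nc'.
  case: (@arg_minnP _ c' PM (fun z => #|[set e : L | e <= z]|) PMc') => cm /andP[cmx ncm] HminM.
  have jcm : j < cm.
    have := hch j cm jx cmx; rewrite compE => /orP[jc|cj].
      rewrite lt_neqAle jc andbT; apply/eqP => e; by move: ncm; rewrite -e ju.
    by move: ncm; rewrite (le_trans cj ju).
  have cmK : cm \in K by rewrite inE cmx jcm.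
  have /andP[ddx hdd] := dselP cm cmK.
  pose PP := [pred z : L | (z >< x) && (z < cm)].
  have PPj : PP j by rewrite /= jx jcm.
  case: (@arg_maxnP _ j PP (fun z => #|[set e : L | e <= z]|) PPj) => p /andP[px pcm] HmaxP.
  have pu : p <= u.
    apply/negPn/negP => np; have := HminM p; rewrite /= px np => /(_ isT).
    by rewrite leqNgt (down_lt pcm).
  have hp : upper_covers cm p.
    rewrite /upper_covers pcm /=; apply/forallP => w; apply/negP => /andP[pw wcm].
    have wx : w >< x.
      rewrite incompE; apply/andP; split; apply/negP => h.
        by case: (incx p px) => /negP HH _; apply: HH; exact: le_trans (ltW pw) h.
      by case: (incx cm cmx) => _ /negP; apply; exact: le_trans h (ltW wcm).
    have := HmaxP w; rewrite /= wx wcm => /(_ isT) /=.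
    by rewrite leqNgt (down_lt pw).
  have npd : p != dsel cm.
    apply/eqP => e; case: (incx p px) => /negP HH _; apply: HH; by rewrite e (ltW ddx).
  have ecm := two_covers_join hp hdd npd.
  by move: ncm; rewrite -ecm leUx pu (le_trans (ltW ddx) xu).
pose D := [set e : L | e < x].
pose C := [set e : L | e >< x].
pose U := [set e : L | x <= e].
have hsub : upset j \subset [set j] :|: K :|: upset (c `|` x).
  apply/subsetP => e; rewrite inE => je; rewrite !inE.
  case: (eqVneq e j) => [->|nej]; first by [].
  have jlt : j < e by rewrite lt_neqAle eq_sym nej je.
  case: (boolP (e >< x)) => ex; first by rewrite jlt.
  have xe : x <= e.
    move: ex; rewrite incompE negb_and !negbK => /orP[ex|//].
    by case: (incx j jx) => /negP HH _; exfalso; apply: HH; exact: le_trans je ex.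
  by rewrite leUx (key e xe je c cx) xe !orbT.
have hup : (#|upset j| <= 1 + #|K| + #|upset (c `|` x)|)%N.
  apply: leq_trans (subset_leq_card hsub) _.
  rewrite !cardsU cards1; move: #|K| #|upset _| #|_ :&: K| #|_ :&: upset _| => a b c1 c2; lia.
have hKC : (#|K| + 1 <= #|C|)%N.
  have sub : K \subset C :\ j.
    apply/subsetP => e; rewrite !inE => /andP[ex je]; rewrite ex andbT.
    by rewrite (gt_eqF je).
  have := subset_leq_card sub; rewrite [#|C|](cardsD1 j) inE jx /= => h; by rewrite addn1 add1n ltnS.
have hKD : (#|K| + 1 <= #|D|)%N.
  have inj : {in K &, injective dsel}.
    move=> e1 e2 h1 h2 he.
    have := h1; rewrite inE => /andP[e1x je1].
    have := h2; rewrite inE => /andP[e2x je2].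
    have /andP[_ c1] := dselP e1 h1; have /andP[_ c2] := dselP e2 h2.
    case: (eqVneq e1 e2) => // ne; exfalso.
    have := hch e1 e2 e1x e2x; rewrite compE => /orP[l12|l21].
      have lt12 : e1 < e2 by rewrite lt_neqAle ne l12.
      by apply: (cov_nb c2 _ lt12); rewrite -he; exact: cov_lt c1.
    have lt21 : e2 < e1 by rewrite lt_neqAle eq_sym ne l21.
    by apply: (cov_nb c1 _ lt21); rewrite he; exact: cov_lt c2.
  have jb : \bot < j.
    rewrite lt_neqAle le0x andbT; apply/eqP => e.
    by case: (incx j jx) => /negP HH _; apply: HH; rewrite -e le0x.
  have sub : dsel @: K \subset D :\ \bot.
    apply/subsetP => dd /imsetP[e eK ->]; rewrite !inE.
    have /andP[dx hde] := dselP e eK; rewrite dx andbT.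
    apply/eqP => eb; have := eK; rewrite inE => /andP[_ je].
    by apply: (cov_nb hde _ je); rewrite eb.
  have := subset_leq_card sub; rewrite card_in_imset //.
  rewrite [#|D|](cardsD1 \bot) inE lt_neqAle le0x eq_sym x0 /= => h; by rewrite addn1 add1n ltnS.
have hpart : (#|D| + #|C| + #|U| <= #|L|)%N.
  have DC : D :&: C = set0.
    apply/setP => e; rewrite !inE; apply/negP => /andP[ex ecx].
    by case: (incx e ecx) => /negP HH _; apply: HH; exact: ltW ex.
  have DCU : (D :|: C) :&: U = set0.
    apply/setP => e; rewrite !inE; apply/negP => /andP[/orP[ex|ecx] xe].
      by move: (lt_le_trans ex xe); rewrite ltxx.
    by case: (incx e ecx) => _ /negP; apply.
  have := subset_leq_card (subsetT (D :|: C :|: U)).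
  rewrite cardsT !cardsU DC DCU !cards0 !subn0 //.
have hb := Hbad j jj.
move: hc; rewrite -/U => hc.
move: hb hc hup hKC hKD hpart.
move: #|upset j| #|upset (c `|` x)| #|K| #|C| #|D| #|U| #|L| => a b k cc dd u n.
lia.
Qed.
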